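(* For all $\alpha\in\left(0,\left(\frac{24}{25}\right)^{1/3}\right]$, $$\lambda_3(\alpha)\ge\sqrt{15}-\frac65\left(\frac{24}{25}\right)^{1/3}-\frac9{25}.$$
   Context: For $\alpha\in\mathbb R$, let $\mathfrak h_{\mathcal M}(\alpha)=-\frac{d^2}{dt^2}+\left(\frac12 t^2-\alpha\right)^2$ be the self-adjoint operator on $L^2(\mathbb R)$ with domain $\{u\in L^2(\mathbb R): -u''+(\frac12 t^2-\alpha)^2u\in L^2(\mathbb R)\}$, with simple positive eigenvalues $0<\lambda_1(\alpha)<\lambda_2(\alpha)<\lambda_3(\alpha)<\cdots\to+\infty$. *)

(* Defs.v *)
From Stdlib Require Import Reals List.
From Coquelicot Require Import Coquelicot.
Open Scope R_scope.

Definition potM (alpha t : R) : R := (t ^ 2 / 2 - alpha) ^ 2.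

Definition sq_integrable (u : R -> R) : Prop :=
  ex_RInt_gen (fun t => (u t) ^ 2) (Rbar_locally m_infty) (Rbar_locally p_infty).

Definition is_eigenfunction (alpha lam : R) (u : R -> R) : Prop :=
  sq_integrable u /\ (exists t, u t <> 0) /\
  forall t, ex_derive u t /\
    is_derive (Derive u) t (potM alpha t * u t - lam * u t).

Definition is_eigenvalue (alpha lam : R) : Prop :=
  exists u : R -> R, is_eigenfunction alpha lam u.

(* lam is the n-th eigenvalue lambda_n(alpha) (n >= 1), eigenvalues being
   listed in increasing order (they are simple): lam is an eigenvalue and
   exactly n-1 eigenvalues lie strictly below it. *)
Definition is_nth_eigenvalue (alpha : R) (n : nat) (lam : R) : Prop :=
  is_eigenvalue alpha lam /\
  exists l : list R, NoDup l /\ length l = (n - 1)%nat /\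
    forall mu, In mu l <-> (is_eigenvalue alpha mu /\ mu < lam).

(* Main.v *)
Require Import Defs.
From Stdlib Require Import Reals List Lra Psatz Classical.
From Coquelicot Require Import Coquelicot.
Open Scope R_scope.


Lemma isd_mul (f g : R -> R) (x df dg : R) : is_derive f x df -> is_derive g x dg ->
  is_derive (fun t => f t * g t) x (df * g x + f x * dg).
Proof. intros Hf Hg. apply (is_derive_mult f g x df dg Hf Hg). intros; apply Rmult_comm. Qed.
Lemma isd_plus (f g : R -> R) (x df dg : R) : is_derive f x df -> is_derive g x dg ->
  is_derive (fun t => f t + g t) x (df + dg).
Proof. intros Hf Hg. apply (is_derive_plus f g x df dg Hf Hg). Qed.
Lemma isd_minus (f g : R -> R) (x df dg : R) : is_derive f x df -> is_derive g x dg ->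
  is_derive (fun t => f t - g t) x (df - dg).
Proof. intros Hf Hg. apply (is_derive_minus f g x df dg Hf Hg). Qed.
Lemma isd_eq (f : R -> R) (x l l' : R) : is_derive f x l -> l = l' -> is_derive f x l'.
Proof. intros H ->; exact H. Qed.
Lemma isd_const (c x : R) : is_derive (fun _ => c) x 0.
Proof. apply (is_derive_const (K:=R_AbsRing) (V:=R_NormedModule) c x). Qed.
Lemma isd_id (x : R) : is_derive (fun t => t) x 1.
Proof. apply (is_derive_id (K:=R_AbsRing) x). Qed.
Lemma isd_comp_opp (f : R -> R) (x l : R) : is_derive f (-x) l -> is_derive (fun t => f (- t)) x (- l).
Proof. intros H. 
  assert (H1 : is_derive (fun t:R => - t) x (-1)).
  { apply (is_derive_opp (K:=R_AbsRing) (fun t => t) x 1 (isd_id x)). }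
  assert (H2 := is_derive_comp f (fun t => -t) x l (-1) H H1).
  eapply isd_eq. apply H2. simpl. unfold scal; simpl; unfold mult; simpl. ring.
Qed.
Lemma cont_of_derive (f : R -> R) (x l : R) : is_derive f x l -> continuity_pt f x.
Proof. intros H. apply is_derive_Reals in H. apply derivable_continuous_pt. exists l. exact H. Qed.
Lemma continuity_of_derive (f df : R -> R) : (forall x, is_derive f x (df x)) -> continuity f.
Proof. intros H x. apply (cont_of_derive f x (df x) (H x)). Qed.

Lemma mvt (f df : R -> R) (a b : R) : a < b -> (forall t, a <= t <= b -> is_derive f t (df t)) ->
  exists c, f b - f a = df c * (b - a) /\ a < c < b.
Proof. intros Hab Hd. apply MVT_cor2; auto. intros c Hc. apply is_derive_Reals. apply Hd; auto. Qed.

Lemma mono_le (f df : R -> R) (a b : R) : a <= b -> (forall t, a <= t <= b -> is_derive f t (df t)) ->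
  (forall t, a < t < b -> 0 <= df t) -> f a <= f b.
Proof.
  intros Hab Hd Hp. destruct (Req_dec a b) as [->|Hne]; [lra|].
  destruct (mvt f df a b) as [c [Heq Hc]]; [lra|auto|].
  specialize (Hp c Hc). nra.
Qed.
Lemma mono_lt (f df : R -> R) (a b : R) : a < b -> (forall t, a <= t <= b -> is_derive f t (df t)) ->
  (forall t, a < t < b -> 0 < df t) -> f a < f b.
Proof.
  intros Hab Hd Hp.
  destruct (mvt f df a b) as [c [Heq Hc]]; [lra|auto|].
  specialize (Hp c Hc). nra.
Qed.
Lemma anti_le (f df : R -> R) (a b : R) : a <= b -> (forall t, a <= t <= b -> is_derive f t (df t)) ->
  (forall t, a < t < b -> df t <= 0) -> f b <= f a.
Proof.
  intros Hab Hd Hp. destruct (Req_dec a b) as [->|Hne]; [lra|].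
  destruct (mvt f df a b) as [c [Heq Hc]]; [lra|auto|].
  specialize (Hp c Hc). nra.
Qed.
Lemma anti_lt (f df : R -> R) (a b : R) : a < b -> (forall t, a <= t <= b -> is_derive f t (df t)) ->
  (forall t, a < t < b -> df t < 0) -> f b < f a.
Proof.
  intros Hab Hd Hp.
  destruct (mvt f df a b) as [c [Heq Hc]]; [lra|auto|].
  specialize (Hp c Hc). nra.
Qed.

Lemma deriv_const_zero (f : R -> R) (a b c t l : R) : (forall s, a < s < b -> f s = c) -> a < t < b ->
  is_derive f t l -> l = 0.
Proof.
  intros Hc Ht Hd.
  assert (Hloc : locally t (fun s => f s = c)).
  { assert (He : 0 < Rmin (t - a) (b - t)) by (apply Rmin_pos; lra).
    exists (mkposreal _ He). intros y Hy. apply Hc.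
    change (Rabs (y - t) < Rmin (t - a) (b - t)) in Hy.
    apply Rabs_lt_between in Hy. 
    assert (Rmin (t - a) (b - t) <= t - a) by apply Rmin_l.
    assert (Rmin (t - a) (b - t) <= b - t) by apply Rmin_r. lra. }
  assert (H2 : is_derive (fun _ => c) t l) by (eapply is_derive_ext_loc; eauto).
  apply is_derive_unique in H2. rewrite <- H2.
  apply is_derive_unique. apply isd_const.
Qed.


Definition sol (al mu : R) (u u1 : R -> R) : Prop :=
  (forall t, is_derive u t (u1 t)) /\
  (forall t, is_derive u1 t ((potM al t - mu) * u t)).

Lemma potM_even (al t : R) : potM al (- t) = potM al t.
Proof. unfold potM. field. Qed.

Lemma sol_opp (al mu : R) (u u1 : R -> R) : sol al mu u u1 -> sol al mu (fun t => - u t) (fun t => - u1 t).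
Proof.
  intros [H1 H2]. split; intro t.
  - apply (is_derive_opp (K:=R_AbsRing) u t (u1 t) (H1 t)).
  - eapply isd_eq. apply (is_derive_opp (K:=R_AbsRing) u1 t _ (H2 t)).
    simpl. unfold opp; simpl. cbv beta. ring.
Qed.

Lemma sol_refl (al mu : R) (u u1 : R -> R) : sol al mu u u1 ->
  sol al mu (fun t => u (- t)) (fun t => - u1 (- t)).
Proof.
  intros [H1 H2]. split; intro t.
  - apply isd_comp_opp. apply H1.
  - eapply isd_eq. apply (is_derive_opp (K:=R_AbsRing) (fun t => u1 (- t)) t).
    apply isd_comp_opp. apply H2. simpl. unfold opp; simpl. rewrite potM_even. ring.
Qed.

Definition Pf (w u u1 : R -> R) (t : R) := u t * u1 t - w t * (u t * u t).

Lemma Pf_deriv (al mu : R) (u u1 w w1 : R -> R) (t : R) : sol al mu u u1 -> is_derive w t (w1 t) ->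
  is_derive (Pf w u u1) t
   ((u1 t - w t * u t) ^ 2 + (potM al t - mu - w1 t - w t ^ 2) * (u t * u t)).
Proof.
  intros [H1 H2] Hw. unfold Pf.
  eapply isd_eq.
  apply isd_minus. apply isd_mul; [apply H1|apply H2].
  apply isd_mul; [apply Hw|]. apply isd_mul; apply H1.
  cbv beta. ring.
Qed.

Definition Wr (ui ui1 uj uj1 : R -> R) (t : R) := ui t * uj1 t - ui1 t * uj t.

Lemma Wr_deriv (al mi mj : R) (ui ui1 uj uj1 : R -> R) (t : R) : sol al mi ui ui1 -> sol al mj uj uj1 ->
  is_derive (Wr ui ui1 uj uj1) t ((mi - mj) * (ui t * uj t)).
Proof.
  intros [H1 H2] [H3 H4]. unfold Wr. eapply isd_eq.
  apply isd_minus; apply isd_mul; auto. cbv beta. ring.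
Qed.

Lemma uniq_right (al mu : R) (u u1 : R -> R) (t0 t : R) : 0 <= al -> sol al mu u u1 -> u t0 = 0 -> u1 t0 = 0 ->
  t0 <= t -> u t = 0.
Proof.
  intros Hal Hs Hu Hu1 Ht.
  set (M := Rabs t0 + Rabs t).
  set (K := 1 + Rabs mu + (M * M / 2 + al) ^ 2).
  set (E := fun s => (u s * u s + u1 s * u1 s) * exp (- K * s)).
  assert (HE : forall s, is_derive E s
     ((2 * u s * u1 s * (1 + (potM al s - mu)) - K * (u s * u s + u1 s * u1 s)) * exp (- K * s))).
  { intro s. destruct Hs as [H1 H2]. unfold E. eapply isd_eq.
    apply isd_mul. apply isd_plus; apply isd_mul; auto.
    auto_derive; auto. cbv beta. ring. }
  assert (Hle : E t <= E t0).
  { apply (anti_le E (fun s => (2 * u s * u1 s * (1 + (potM al s - mu)) - K * (u s * u s + u1 s * u1 s)) * exp (- K * s)) t0 t Ht); [intros; apply HE|].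
    intros s Hs'. 
    assert (Hsm : s * s <= M * M).
    { unfold M. assert (Rabs s <= Rabs t0 + Rabs t).
      { unfold Rabs; repeat destruct Rcase_abs; lra. }
      assert (0 <= Rabs s) by apply Rabs_pos.
      assert (s * s = Rabs s * Rabs s) by (rewrite <- Rabs_mult; rewrite Rabs_pos_eq; nra).
      nra. }
    assert (Hq : Rabs (1 + (potM al s - mu)) <= K).
    { unfold K, potM. assert (0 <= s * s) by nra.
      assert (Hb : (s ^ 2 / 2 - al) ^ 2 <= (M * M / 2 + al) ^ 2).
      { assert (Hx1 : s ^ 2 / 2 - al <= M * M / 2 + al) by (simpl; lra).
        assert (Hx2 : - (M * M / 2 + al) <= s ^ 2 / 2 - al) by (simpl; lra).
        set (x := s ^ 2 / 2 - al) in *. set (B := M * M / 2 + al) in *. simpl. nra. }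
      assert (0 <= (s ^ 2 / 2 - al) ^ 2) by apply pow2_ge_0.
      assert (mu <= Rabs mu) by apply Rle_abs.
      assert (- mu <= Rabs mu) by (rewrite <- Rabs_Ropp; apply Rle_abs).
      apply Rabs_le. lra. }
    assert (0 < exp (- K * s)) by apply exp_pos.
    assert (Hk : 2 * u s * u1 s * (1 + (potM al s - mu)) <= K * (u s * u s + u1 s * u1 s)).
    { assert (h1 : 2 * u s * u1 s * (1 + (potM al s - mu)) <= Rabs (2 * u s * u1 s) * Rabs (1 + (potM al s - mu))).
      { rewrite <- Rabs_mult. apply Rle_abs. }
      assert (h2 : Rabs (2 * u s * u1 s) <= u s * u s + u1 s * u1 s).
      { pose proof (pow2_ge_0 (u s - u1 s)); pose proof (pow2_ge_0 (u s + u1 s)). unfold Rabs; destruct Rcase_abs; nra. }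
      assert (0 <= Rabs (2 * u s * u1 s)) by apply Rabs_pos.
      assert (0 <= Rabs (1 + (potM al s - mu))) by apply Rabs_pos.
      assert (0 <= u s * u s + u1 s * u1 s) by nra. nra. }
    nra. }
  unfold E in Hle. rewrite Hu, Hu1 in Hle.
  assert (0 < exp (- K * t)) by apply exp_pos.
  assert (H0 : (u t * u t + u1 t * u1 t) * exp (- K * t) <= 0 * exp (- K * t)) by lra.
  apply Rmult_le_reg_r in H0; [|lra].
  assert (Hz : u t * u t = 0) by (pose proof (pow2_ge_0 (u t)); pose proof (pow2_ge_0 (u1 t)); simpl in *; lra).
  destruct (Rmult_integral _ _ Hz); auto.
Qed.


Lemma abs_lt_of_sq (x e : R) : 0 < e -> x * x < e * e -> Rabs x < e.
Proof. intros He H. unfold Rabs; destruct Rcase_abs; nra. Qed.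

Lemma potM_ge_T (al mu t : R) : 0 <= al -> 2 + al + Rabs mu <= t -> mu <= potM al t.
Proof.
  intros Hal Ht. unfold potM.
  assert (mu <= Rabs mu) by apply Rle_abs.
  assert (0 <= Rabs mu) by apply Rabs_pos.
  assert (Hx : 2 + Rabs mu <= t ^ 2 / 2 - al) by (simpl; nra).
  set (x := t ^ 2 / 2 - al) in *. simpl. nra.
Qed.

Lemma decay_right (al mu : R) (u u1 : R -> R) : 0 <= al -> sol al mu u u1 ->
  (forall t0 d, 0 < d -> exists t, t0 <= t /\ u t * u t < d) ->
  forall e, 0 < e -> exists T, forall t, T <= t -> Rabs (u t) < e /\ Rabs (u1 t) < e.
Proof.
  intros Hal Hs HL.
  destruct Hs as [H1 H2].
  set (T0 := 2 + al + Rabs mu).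
  assert (Hq : forall t, T0 <= t -> 0 <= potM al t - mu).
  { intros t Ht. pose proof (potM_ge_T al mu t Hal Ht). lra. }
  assert (HG : forall t, is_derive (fun s => u s * u1 s) t (u1 t * u1 t + u t * ((potM al t - mu) * u t))).
  { intro t. eapply isd_eq. apply isd_mul; auto. ring. }
  assert (HGm : forall a b, T0 <= a -> a <= b -> u a * u1 a <= u b * u1 b).
  { intros a b Ha Hab. apply (mono_le (fun s => u s * u1 s) (fun t => u1 t * u1 t + u t * ((potM al t - mu) * u t)) a b Hab).
    intros; apply HG. intros t Ht. pose proof (Hq t ltac:(lra)).
    pose proof (pow2_ge_0 (u1 t)). pose proof (pow2_ge_0 (u t)). simpl in *. nra. }
  assert (HGneg : forall t, T0 <= t -> u t * u1 t <= 0).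
  { intros t1 Ht1. destruct (Rle_or_lt (u t1 * u1 t1) 0) as [|Hpos]; auto. exfalso.
    set (g := u t1 * u1 t1) in *.
    assert (HF : forall t, t1 <= t -> u t1 * u t1 + 2 * g * (t - t1) <= u t * u t).
    { intros t Ht.
      assert (Hm := mono_le (fun s => u s * u s - 2 * g * s) (fun s => 2 * (u s * u1 s) - 2 * g) t1 t Ht).
      assert (Hm' : u t1 * u t1 - 2 * g * t1 <= u t * u t - 2 * g * t).
      { apply Hm.
        - intros s _. eapply isd_eq. apply isd_minus. apply isd_mul; apply H1.
          apply is_derive_scal. apply isd_id. ring.
        - intros s Hs. pose proof (HGm t1 s Ht1 ltac:(lra)). unfold g. lra. }
      lra. }
    destruct (HL (t1 + 1) g Hpos) as [t [Ht Hlt]].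
    pose proof (HF t ltac:(lra)). pose proof (pow2_ge_0 (u t1)). simpl in *. nra. }
  assert (HF2 : forall a b, T0 <= a -> a <= b -> u b * u b <= u a * u a).
  { intros a b Ha Hab. apply (anti_le (fun s => u s * u s) (fun s => 2 * (u s * u1 s)) a b Hab).
    - intros s _. eapply isd_eq. apply isd_mul; apply H1. ring.
    - intros s Hs. pose proof (HGneg s ltac:(lra)). lra. }
  assert (HH2 : forall a b, T0 <= a -> a <= b -> u1 b * u1 b <= u1 a * u1 a).
  { intros a b Ha Hab. apply (anti_le (fun s => u1 s * u1 s) (fun s => 2 * (potM al s - mu) * (u s * u1 s)) a b Hab).
    - intros s _. eapply isd_eq. apply isd_mul; apply H2. ring.
    - intros s Hs. pose proof (HGneg s ltac:(lra)). pose proof (Hq s ltac:(lra)). nra. }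
  assert (Hu : forall e, 0 < e -> exists T, T0 <= T /\ forall t, T <= t -> Rabs (u t) < e).
  { intros e He. destruct (HL T0 (e * e) ltac:(nra)) as [t1 [Ht1 Hlt]].
    exists t1. split; auto. intros t Ht. apply abs_lt_of_sq; auto.
    pose proof (HF2 t1 t Ht1 Ht). lra. }
  intros e He.
  destruct (Hu (e / 2) ltac:(lra)) as [T1 [HT1 HuT]].
  destruct (classic (exists t2, T1 <= t2 /\ u1 t2 * u1 t2 < e * e)) as [[t2 [Ht2 Hlt]]|Hno].
  - exists t2. intros t Ht. split.
    + pose proof (HuT t ltac:(lra)). lra.
    + apply abs_lt_of_sq; auto. pose proof (HH2 t2 t ltac:(lra) Ht). lra.
  - exfalso.
    destruct (mvt u u1 T1 (T1 + 1) ltac:(lra)) as [c [Hc Hcin]].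
    { intros; apply H1. }
    assert (Hc2 : e * e <= u1 c * u1 c).
    { destruct (Rle_or_lt (e * e) (u1 c * u1 c)); auto. exfalso. apply Hno. exists c. split; lra. }
    pose proof (HuT T1 ltac:(lra)). pose proof (HuT (T1 + 1) ltac:(lra)).
    assert (Habs : Rabs (u (T1 + 1) - u T1) < e).
    { eapply Rle_lt_trans. apply Rabs_triang. rewrite Rabs_Ropp. lra. }
    replace (u (T1 + 1) - u T1) with (u1 c) in Habs by (rewrite Hc; ring).
    assert (Habs2 : u1 c * u1 c < e * e).
    { assert (0 <= Rabs (u1 c)) by apply Rabs_pos.
      assert (Rabs (u1 c * u1 c) = Rabs (u1 c) * Rabs (u1 c)) by apply Rabs_mult.
      assert (u1 c * u1 c <= Rabs (u1 c * u1 c)) by apply Rle_abs. nra. }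
    lra.
Qed.


Lemma L2_bound (u : R -> R) : sq_integrable u ->
  exists l, forall M1 M2, exists a b, a < M1 /\ M2 < b /\ ex_RInt (fun t => (u t) ^ 2) a b /\
     Rabs (RInt (fun t => (u t) ^ 2) a b) <= l.
Proof.
  intros [l Hl]. exists (Rabs l + 1).
  intros M0 M2.
  unfold is_RInt_gen, filterlimi, filter_le in Hl.
  assert (Hb : locally l (ball l (mkposreal 1 Rlt_0_1))) by apply locally_ball.
  specialize (Hl _ Hb). unfold filtermapi in Hl.
  destruct Hl as [Q R0 [M HQ] [M' HR] HP].
  set (a := Rmin (M - 1) (M0 - 1)). set (b := Rmax (M' + 1) (M2 + 1)).
  assert (a < M) by (unfold a; pose proof (Rmin_l (M-1) (M0-1)); lra).
  assert (a < M0) by (unfold a; pose proof (Rmin_r (M-1) (M0-1)); lra).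
  assert (M' < b) by (unfold b; pose proof (Rmax_l (M'+1) (M2+1)); lra).
  assert (M2 < b) by (unfold b; pose proof (Rmax_r (M'+1) (M2+1)); lra).
  destruct (HP a b (HQ a ltac:(lra)) (HR b ltac:(lra))) as [y [Hy Hby]].
  exists a, b. split; [lra|]. split; [lra|]. split.
  - exists y. exact Hy.
  - change (is_RInt (fun t => (u t) ^ 2) a b y) in Hy. rewrite (is_RInt_unique _ _ _ _ Hy).
    change (Rabs (y - l) < 1) in Hby.
    assert (Rabs y <= Rabs (y - l) + Rabs l).
    { replace y with ((y - l) + l) at 1 by ring. apply Rabs_triang. }
    lra.
Qed.

Lemma L2_right (u : R -> R) : sq_integrable u ->
  forall t0 d, 0 < d -> exists t, t0 <= t /\ u t * u t < d.
Proof.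
  intros Hsq t0 d Hd.
  destruct (classic (exists t, t0 <= t /\ u t * u t < d)) as [H|Hno]; auto. exfalso.
  assert (Hge : forall t, t0 <= t -> d <= (u t) ^ 2).
  { intros t Ht. destruct (Rle_or_lt d ((u t)^2)); auto. exfalso. apply Hno. exists t. simpl in *; split; lra. }
  destruct (L2_bound u Hsq) as [l Hl].
  destruct (Hl t0 (t0 + (Rabs l + 1) / d + 1)) as [a [b [Ha [Hb [Hex Hle]]]]].
  assert (Hpos : 0 < (Rabs l + 1) / d).
  { apply Rdiv_lt_0_compat; auto. pose proof (Rabs_pos l). lra. }
  assert (Hab : a <= t0 <= b) by lra.
  assert (Ex1 : ex_RInt (fun t => (u t)^2) a t0) by (apply (ex_RInt_Chasles_1 (V:=R_CompleteNormedModule) _ a t0 b); auto).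
  assert (Ex2 : ex_RInt (fun t => (u t)^2) t0 b) by (apply (ex_RInt_Chasles_2 (V:=R_CompleteNormedModule) _ a t0 b); auto).
  assert (Hch := RInt_Chasles _ _ _ _ Ex1 Ex2). simpl in Hch.
  assert (I1 : 0 <= RInt (fun t => (u t)^2) a t0).
  { apply RInt_ge_0; auto; [lra|]. intros; apply pow2_ge_0. }
  assert (I2 : RInt (fun _ => d) t0 b <= RInt (fun t => (u t)^2) t0 b).
  { apply RInt_le; auto; [lra| |]. apply ex_RInt_const. intros x Hx. apply Hge. lra. }
  rewrite RInt_const in I2. unfold scal in I2; simpl in I2; unfold mult in I2; simpl in I2.
  assert (Hlt : RInt (fun t => (u t)^2) a b <= Rabs (RInt (fun t => (u t)^2) a b)) by apply Rle_abs.
  unfold plus in Hch; simpl in Hch.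
  assert (d * ((Rabs l + 1) / d) = Rabs l + 1) by (field; lra).
  assert (l <= Rabs l) by apply Rle_abs.
  assert (Hm : ((Rabs l + 1) / d) * d <= (b - t0) * d) by (apply Rmult_le_compat_r; lra).
  simpl in I1, Hlt, Hle. lra.
Qed.

Lemma L2_left (u : R -> R) : sq_integrable u ->
  forall t0 d, 0 < d -> exists t, t <= t0 /\ u t * u t < d.
Proof.
  intros Hsq t0 d Hd.
  destruct (classic (exists t, t <= t0 /\ u t * u t < d)) as [H|Hno]; auto. exfalso.
  assert (Hge : forall t, t <= t0 -> d <= (u t) ^ 2).
  { intros t Ht. destruct (Rle_or_lt d ((u t)^2)); auto. exfalso. apply Hno. exists t. simpl in *; split; lra. }
  destruct (L2_bound u Hsq) as [l Hl].
  destruct (Hl (t0 - (Rabs l + 1) / d - 1) t0) as [a [b [Ha [Hb [Hex Hle]]]]].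
  assert (Hpos : 0 < (Rabs l + 1) / d).
  { apply Rdiv_lt_0_compat; auto. pose proof (Rabs_pos l). lra. }
  assert (Hab : a <= t0 <= b) by lra.
  assert (Ex1 : ex_RInt (fun t => (u t)^2) a t0) by (apply (ex_RInt_Chasles_1 (V:=R_CompleteNormedModule) _ a t0 b); auto).
  assert (Ex2 : ex_RInt (fun t => (u t)^2) t0 b) by (apply (ex_RInt_Chasles_2 (V:=R_CompleteNormedModule) _ a t0 b); auto).
  assert (Hch := RInt_Chasles _ _ _ _ Ex1 Ex2). simpl in Hch.
  assert (I1 : 0 <= RInt (fun t => (u t)^2) t0 b).
  { apply RInt_ge_0; auto; [lra|]. intros; apply pow2_ge_0. }
  assert (I2 : RInt (fun _ => d) a t0 <= RInt (fun t => (u t)^2) a t0).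
  { apply RInt_le; auto; [lra| |]. apply ex_RInt_const. intros x Hx. apply Hge. lra. }
  rewrite RInt_const in I2. unfold scal in I2; simpl in I2; unfold mult in I2; simpl in I2.
  assert (Hlt : RInt (fun t => (u t)^2) a b <= Rabs (RInt (fun t => (u t)^2) a b)) by apply Rle_abs.
  unfold plus in Hch; simpl in Hch.
  assert (d * ((Rabs l + 1) / d) = Rabs l + 1) by (field; lra).
  assert (l <= Rabs l) by apply Rle_abs.
  assert (Hm : ((Rabs l + 1) / d) * d <= (t0 - a) * d) by (apply Rmult_le_compat_r; lra).
  simpl in I1, Hlt, Hle. lra.
Qed.


Definition HLp (u : R -> R) := forall t0 d, 0 < d -> exists t, t0 <= t /\ u t * u t < d.
Definition HLm (u : R -> R) := forall t0 d, 0 < d -> exists t, t <= t0 /\ u t * u t < d.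
Definition EF (al mu : R) (u u1 : R -> R) :=
  sol al mu u u1 /\ HLp u /\ HLm u /\ (exists t, u t <> 0).

Lemma EF_opp (al mu : R) (u u1 : R -> R) : EF al mu u u1 -> EF al mu (fun t => - u t) (fun t => - u1 t).
Proof.
  intros [Hs [Hp [Hm [t Ht]]]]. split; [apply sol_opp; auto|]. split; [|split].
  - intros t0 d Hd. destruct (Hp t0 d Hd) as [x [? ?]]. exists x. split; auto. lra.
  - intros t0 d Hd. destruct (Hm t0 d Hd) as [x [? ?]]. exists x. split; auto. lra.
  - exists t. lra.
Qed.

Lemma EF_refl (al mu : R) (u u1 : R -> R) : EF al mu u u1 -> EF al mu (fun t => u (- t)) (fun t => - u1 (- t)).
Proof.
  intros [Hs [Hp [Hm [t Ht]]]]. split; [apply sol_refl; auto|]. split; [|split].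
  - intros t0 d Hd. destruct (Hm (- t0) d Hd) as [x [? ?]]. exists (- x). split; [lra|].
    rewrite Ropp_involutive. auto.
  - intros t0 d Hd. destruct (Hp (- t0) d Hd) as [x [? ?]]. exists (- x). split; [lra|].
    rewrite Ropp_involutive. auto.
  - exists (- t). rewrite Ropp_involutive. auto.
Qed.

Lemma decay_p (al mu : R) (u u1 : R -> R) : 0 <= al -> EF al mu u u1 ->
  forall e, 0 < e -> exists T, forall t, T <= t -> Rabs (u t) < e /\ Rabs (u1 t) < e.
Proof. intros Hal [Hs [Hp _]]. apply (decay_right al mu u u1 Hal Hs Hp). Qed.

Lemma decay_m (al mu : R) (u u1 : R -> R) : 0 <= al -> EF al mu u u1 ->
  forall e, 0 < e -> exists T, forall t, t <= T -> Rabs (u t) < e /\ Rabs (u1 t) < e.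
Proof.
  intros Hal HE e He.
  destruct (decay_p al mu _ _ Hal (EF_refl _ _ _ _ HE) e He) as [T HT].
  exists (- T). intros t Ht. destruct (HT (- t) ltac:(lra)) as [h1 h2].
  rewrite Ropp_involutive in h1, h2. rewrite Rabs_Ropp in h2. auto.
Qed.

Lemma uniq_all (al mu : R) (u u1 : R -> R) (t0 : R) : 0 <= al -> sol al mu u u1 ->
  u t0 = 0 -> u1 t0 = 0 -> forall t, u t = 0.
Proof.
  intros Hal Hs H0 H1 t. destruct (Rle_or_lt t0 t).
  - eapply uniq_right; eauto.
  - assert (Hr := sol_refl _ _ _ _ Hs).
    assert (HH := uniq_right al mu (fun t => u (- t)) (fun t => - u1 (- t)) (- t0) (- t) Hal Hr).
    cbv beta in HH. rewrite !Ropp_involutive in HH. apply HH; auto. rewrite H1; ring. lra.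
Qed.

Lemma EF_interval (al mu : R) (u u1 : R -> R) (p q : R) : 0 <= al -> EF al mu u u1 -> p < q ->
  (forall t, p < t < q -> u t = 0) -> False.
Proof.
  intros Hal [Hs [_ [_ [t Ht]]]] Hpq H0.
  set (m := (p + q) / 2).
  assert (Hm : p < m < q) by (unfold m; lra).
  assert (Hu1 : u1 m = 0).
  { eapply (deriv_const_zero u p q 0 m). exact H0. exact Hm. apply (proj1 Hs). }
  apply Ht. apply (uniq_all al mu u u1 m Hal Hs (H0 m Hm) Hu1).
Qed.


Lemma pic_mono (al mu : R) (u u1 w w1 : R -> R) (a b : R) : sol al mu u u1 -> a <= b ->
  (forall t, a <= t <= b -> is_derive w t (w1 t)) ->
  (forall t, a <= t <= b -> mu < potM al t - w1 t - (w t) ^ 2) ->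
  Pf w u u1 a <= Pf w u u1 b.
Proof.
  intros Hs Hab Hw Hg.
  apply (mono_le (Pf w u u1) (fun t => (u1 t - w t * u t) ^ 2 + (potM al t - mu - w1 t - w t ^ 2) * (u t * u t)) a b Hab).
  - intros t Ht. apply Pf_deriv; auto.
  - intros t Ht. pose proof (Hg t ltac:(lra)). pose proof (pow2_ge_0 (u1 t - w t * u t)).
    pose proof (pow2_ge_0 (u t)). simpl in *. nra.
Qed.

Lemma pic_zero (al mu : R) (u u1 w w1 : R -> R) (a b : R) : sol al mu u u1 -> a < b ->
  (forall t, a <= t <= b -> is_derive w t (w1 t)) ->
  (forall t, a <= t <= b -> mu < potM al t - w1 t - (w t) ^ 2) ->
  Pf w u u1 b <= Pf w u u1 a -> forall t, a < t < b -> u t = 0.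
Proof.
  intros Hs Hab Hw Hg Hle t Ht.
  assert (Hc : forall s, a < s < b -> Pf w u u1 s = Pf w u u1 a).
  { intros s Hs'.
    pose proof (pic_mono al mu u u1 w w1 a s Hs ltac:(lra) ltac:(intros; apply Hw; lra) ltac:(intros; apply Hg; lra)).
    pose proof (pic_mono al mu u u1 w w1 s b Hs ltac:(lra) ltac:(intros; apply Hw; lra) ltac:(intros; apply Hg; lra)).
    lra. }
  assert (H0 := deriv_const_zero (Pf w u u1) a b _ t _ Hc Ht (Pf_deriv al mu u u1 w w1 t Hs (Hw t ltac:(lra)))).
  pose proof (Hg t ltac:(lra)). pose proof (pow2_ge_0 (u1 t - w t * u t)).
  assert (Hz : (potM al t - mu - w1 t - w t ^ 2) * (u t * u t) = 0).
  { pose proof (pow2_ge_0 (u t)). simpl in *. nra. }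
  apply Rmult_integral in Hz. destruct Hz as [Hz|Hz]; [simpl in *; lra|].
  apply Rmult_integral in Hz; destruct Hz; auto.
Qed.

Definition kk : R := 153 / 100.
Definition wT (s t : R) : R := - (kk * sin (kk * (t - s)) / cos (kk * (t - s))).
Definition wT1 (s t : R) : R := - (kk * kk) / (cos (kk * (t - s))) ^ 2.

Lemma cos_pos_k (s t : R) : Rabs (t - s) <= 9 / 10 -> 0 < cos (kk * (t - s)).
Proof.
  intros H. pose proof PI2_3_2. apply Rabs_le_between in H. apply cos_gt_0; unfold kk; lra.
Qed.

Lemma wT_deriv (s t : R) : Rabs (t - s) <= 9 / 10 -> is_derive (wT s) t (wT1 s t).
Proof.
  intros H. pose proof (cos_pos_k s t H). unfold wT, wT1.
  auto_derive; replace (t + - s) with (t - s) by ring; [lra|].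
  pose proof (sin2_cos2 (kk * (t - s))). unfold Rsqr in *.
  set (c := cos (kk * (t - s))) in *. set (sn := sin (kk * (t - s))) in *.
  field_simplify_eq; [|lra].
  unfold kk. lra.
Qed.

Lemma wT_g (al s t : R) : Rabs (t - s) <= 9 / 10 -> kk * kk <= potM al t - wT1 s t - (wT s t) ^ 2.
Proof.
  intros H. pose proof (cos_pos_k s t H). unfold wT, wT1.
  pose proof (sin2_cos2 (kk * (t - s))). unfold Rsqr in *.
  set (c := cos (kk * (t - s))) in *. set (sn := sin (kk * (t - s))) in *.
  assert (Hp : 0 <= potM al t) by (unfold potM; apply pow2_ge_0).
  replace (- (kk * kk) / c ^ 2) with (- (kk * kk) * (sn * sn + c * c) / c ^ 2) by (rewrite H1; field; lra).
  replace ((- (kk * sn / c)) ^ 2) with (kk * kk * (sn * sn) / c ^ 2) by (field; lra).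
  replace (potM al t - - (kk * kk) * (sn * sn + c * c) / c ^ 2 - kk * kk * (sn * sn) / c ^ 2)
    with (potM al t + kk * kk) by (field; lra).
  lra.
Qed.


Lemma kk2 : 234 / 100 < kk * kk.
Proof. unfold kk. lra. Qed.

Lemma potM_lb (al a t : R) : 0 <= al <= 1 -> 3 / 2 <= a -> a <= t -> (a * a / 2 - 1) ^ 2 <= potM al t.
Proof.
  intros Hal Ha Ht. unfold potM.
  assert (H1 : 0 <= a * a / 2 - 1) by nra.
  assert (H2 : a * a / 2 - 1 <= t ^ 2 / 2 - al) by (simpl; nra).
  set (x := a * a / 2 - 1) in *. set (y := t ^ 2 / 2 - al) in *. simpl. nra.
Qed.

Lemma middle (al mu : R) (u u1 : R -> R) (a b : R) : 0 <= al -> EF al mu u u1 -> mu < 234 / 100 ->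
  - (9 / 10) <= a -> a < b -> b <= 9 / 10 -> u a = 0 -> u b = 0 -> False.
Proof.
  intros Hal HE Hmu Ha Hab Hb Hua Hub.
  assert (Hs := proj1 HE).
  apply (EF_interval al mu u u1 a b Hal HE Hab).
  apply (pic_zero al mu u u1 (wT 0) (wT1 0) a b Hs Hab).
  - intros t Ht. apply wT_deriv. apply Rabs_le. lra.
  - intros t Ht. pose proof (wT_g al 0 t ltac:(apply Rabs_le; lra)). pose proof kk2. lra.
  - unfold Pf. rewrite Hua, Hub. lra.
Qed.

Definition wL1 (t : R) : R := - (9 / 4) * (t - 9 / 5).
Definition wL2 (t : R) : R := - (27 / 20) - (7 / 4) * (t - 12 / 5).
Definition wC (t : R) : R := - (17 / 10).

Lemma right_side (al mu : R) (u u1 : R -> R) (b0 : R) : 0 <= al <= 1 -> EF al mu u u1 -> mu < 234 / 100 ->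
  9 / 10 <= b0 -> u b0 = 0 -> False.
Proof.
  intros Hal HE Hmu Hb0 Hu0.
  assert (Hs := proj1 HE). assert (Hal0 : 0 <= al) by lra.
  assert (D0 : forall t, 9/10 <= t <= 9/5 -> is_derive (wT (9/5)) t (wT1 (9/5) t)).
  { intros t Ht. apply wT_deriv. apply Rabs_le. lra. }
  assert (G0 : forall t, 9/10 <= t <= 9/5 -> mu < potM al t - wT1 (9/5) t - (wT (9/5) t) ^ 2).
  { intros t Ht. pose proof (wT_g al (9/5) t ltac:(apply Rabs_le; lra)). pose proof kk2. lra. }
  assert (D1 : forall t, 9/5 <= t <= 12/5 -> is_derive wL1 t (- (9/4))).
  { intros t _. unfold wL1. auto_derive; auto. ring. }
  assert (G1 : forall t, 9/5 <= t <= 12/5 -> mu < potM al t - (- (9/4)) - (wL1 t) ^ 2).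
  { intros t Ht. unfold wL1.
    destruct (Rle_or_lt t 2).
    - pose proof (potM_lb al (9/5) t Hal ltac:(lra) ltac:(lra)).
      assert (((- (9 / 4) * (t - 9 / 5)) ^ 2) <= (9/20)^2) by (simpl; nra). lra.
    - destruct (Rle_or_lt t (11/5)).
      + pose proof (potM_lb al 2 t Hal ltac:(lra) ltac:(lra)).
        assert (((- (9 / 4) * (t - 9 / 5)) ^ 2) <= (9/10)^2) by (simpl; nra). lra.
      + pose proof (potM_lb al (11/5) t Hal ltac:(lra) ltac:(lra)).
        assert (((- (9 / 4) * (t - 9 / 5)) ^ 2) <= (27/20)^2) by (simpl; nra). lra. }
  assert (D2 : forall t, 12/5 <= t <= 13/5 -> is_derive wL2 t (- (7/4))).
  { intros t _. unfold wL2. auto_derive; auto. ring. }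
  assert (G2 : forall t, 12/5 <= t <= 13/5 -> mu < potM al t - (- (7/4)) - (wL2 t) ^ 2).
  { intros t Ht. unfold wL2.
    pose proof (potM_lb al (12/5) t Hal ltac:(lra) ltac:(lra)).
    assert (((- (27 / 20) - (7 / 4) * (t - 12 / 5)) ^ 2) <= (17/10)^2) by (simpl; nra). lra. }
  assert (D3 : forall t, 13/5 <= t -> is_derive wC t 0).
  { intros t _. unfold wC. apply isd_const. }
  assert (G3 : forall t, 13/5 <= t -> mu < potM al t - 0 - (wC t) ^ 2).
  { intros t Ht. unfold wC. pose proof (potM_lb al (13/5) t Hal ltac:(lra) ltac:(lra)). lra. }
  assert (T3 : forall t, 13/5 <= t -> Pf wC u u1 t <= 0).
  { intros t Ht. destruct (Rle_or_lt (Pf wC u u1 t) 0) as [|Hpos]; auto. exfalso.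
    set (d := Pf wC u u1 t) in *.
    set (e := Rmin 1 (d / 4)).
    assert (He : 0 < e) by (unfold e; apply Rmin_pos; lra).
    assert (He1 : e <= 1) by apply Rmin_l.
    assert (He2 : e <= d / 4) by apply Rmin_r.
    destruct (decay_p al mu u u1 Hal0 HE e He) as [T HT].
    set (T' := Rmax T t).
    assert (HT1 : T <= T') by apply Rmax_l. assert (HT2 : t <= T') by apply Rmax_r.
    destruct (HT T' HT1) as [Hu Hu1].
    assert (Hm : d <= Pf wC u u1 T').
    { apply (pic_mono al mu u u1 wC (fun _ => 0) t T' Hs HT2).
      - intros; apply D3; lra. - intros; apply G3; lra. }
    unfold Pf, wC in Hm.
    assert (Rabs (u T' * u1 T') < e) by (rewrite Rabs_mult; pose proof (Rabs_pos (u T')); pose proof (Rabs_pos (u1 T')); nra).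
    assert (Rabs (u T' * u T') < e) by (rewrite Rabs_mult; pose proof (Rabs_pos (u T')); nra).
    assert (u T' * u1 T' <= Rabs (u T' * u1 T')) by apply Rle_abs.
    assert (u T' * u T' <= Rabs (u T' * u T')) by apply Rle_abs.
    lra. }
  assert (T2 : forall t, 12/5 <= t <= 13/5 -> Pf wL2 u u1 t <= 0).
  { intros t Ht. 
    assert (Pf wL2 u u1 (13/5) = Pf wC u u1 (13/5)) by (unfold Pf, wL2, wC; f_equal; f_equal; lra).
    pose proof (T3 (13/5) ltac:(lra)).
    pose proof (pic_mono al mu u u1 wL2 (fun _ => - (7/4)) t (13/5) Hs ltac:(lra)
      ltac:(intros; apply D2; lra) ltac:(intros; apply G2; lra)). lra. }
  assert (T1 : forall t, 9/5 <= t <= 12/5 -> Pf wL1 u u1 t <= 0).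
  { intros t Ht.
    assert (Pf wL1 u u1 (12/5) = Pf wL2 u u1 (12/5)) by (unfold Pf, wL1, wL2; f_equal; f_equal; lra).
    pose proof (T2 (12/5) ltac:(lra)).
    pose proof (pic_mono al mu u u1 wL1 (fun _ => - (9/4)) t (12/5) Hs ltac:(lra)
      ltac:(intros; apply D1; lra) ltac:(intros; apply G1; lra)). lra. }
  assert (T0 : forall t, 9/10 <= t <= 9/5 -> Pf (wT (9/5)) u u1 t <= 0).
  { intros t Ht.
    assert (Pf (wT (9/5)) u u1 (9/5) = Pf wL1 u u1 (9/5)).
    { unfold Pf, wT, wL1. replace (9/5 - 9/5) with 0 by ring. rewrite Rmult_0_r, sin_0, cos_0. f_equal. f_equal. field. }
    pose proof (T1 (9/5) ltac:(lra)).
    pose proof (pic_mono al mu u u1 (wT (9/5)) (wT1 (9/5)) t (9/5) Hs ltac:(lra)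
      ltac:(intros; apply D0; lra) ltac:(intros; apply G0; lra)). lra. }
  destruct (Rlt_or_le b0 (9/5)).
  { apply (EF_interval al mu u u1 b0 (9/5) Hal0 HE ltac:(lra)).
    apply (pic_zero al mu u u1 (wT (9/5)) (wT1 (9/5)) b0 (9/5) Hs ltac:(lra)).
    - intros; apply D0; lra. - intros; apply G0; lra.
    - pose proof (T0 (9/5) ltac:(lra)). unfold Pf at 2. rewrite Hu0. lra. }
  destruct (Rlt_or_le b0 (12/5)).
  { apply (EF_interval al mu u u1 b0 (12/5) Hal0 HE ltac:(lra)).
    apply (pic_zero al mu u u1 wL1 (fun _ => - (9/4)) b0 (12/5) Hs ltac:(lra)).
    - intros; apply D1; lra. - intros; apply G1; lra.
    - pose proof (T1 (12/5) ltac:(lra)). unfold Pf at 2. rewrite Hu0. lra. }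
  destruct (Rlt_or_le b0 (13/5)).
  { apply (EF_interval al mu u u1 b0 (13/5) Hal0 HE ltac:(lra)).
    apply (pic_zero al mu u u1 wL2 (fun _ => - (7/4)) b0 (13/5) Hs ltac:(lra)).
    - intros; apply D2; lra. - intros; apply G2; lra.
    - pose proof (T2 (13/5) ltac:(lra)). unfold Pf at 2. rewrite Hu0. lra. }
  { apply (EF_interval al mu u u1 b0 (b0 + 1) Hal0 HE ltac:(lra)).
    apply (pic_zero al mu u u1 wC (fun _ => 0) b0 (b0 + 1) Hs ltac:(lra)).
    - intros; apply D3; lra. - intros; apply G3; lra.
    - pose proof (T3 (b0 + 1) ltac:(lra)). unfold Pf at 2. rewrite Hu0. lra. }
Qed.


Lemma dlim (f : R -> R) (p l : R) : is_derive f p l ->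
  forall eps, 0 < eps -> exists del, 0 < del /\ forall h, h <> 0 -> Rabs h < del ->
    Rabs ((f (p + h) - f p) / h - l) < eps.
Proof.
  intros H eps He. apply is_derive_Reals in H. destruct (H eps He) as [del Hd].
  exists del. split; [apply cond_pos|]. intros h Hh Hh2. apply Hd; auto.
Qed.

Lemma pos_right_val (f : R -> R) (p q l : R) : is_derive f p l -> p < q ->
  (forall x, p < x < q -> 0 < f x) -> 0 <= f p.
Proof.
  intros Hd Hpq Hpos. destruct (Rle_or_lt 0 (f p)) as [|Hn]; auto. exfalso.
  set (e := - f p / 2 / (Rabs l + 1)).
  assert (Hal : 0 < Rabs l + 1) by (pose proof (Rabs_pos l); lra).
  assert (He : 0 < e) by (unfold e; apply Rdiv_lt_0_compat; lra).
  destruct (dlim f p l Hd 1 Rlt_0_1) as [del [Hdel Hh]].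
  set (h := Rmin (Rmin del (q - p)) e / 2).
  assert (H0 : 0 < Rmin (Rmin del (q - p)) e) by (repeat apply Rmin_pos; lra).
  assert (h1 : Rmin (Rmin del (q - p)) e <= Rmin del (q - p)) by apply Rmin_l.
  assert (h2 : Rmin (Rmin del (q - p)) e <= e) by apply Rmin_r.
  assert (h3 : Rmin del (q - p) <= del) by apply Rmin_l.
  assert (h4 : Rmin del (q - p) <= q - p) by apply Rmin_r.
  assert (Hh0 : 0 < h) by (unfold h; lra).
  specialize (Hh h ltac:(lra) ltac:(rewrite Rabs_pos_eq; unfold h; lra)).
  apply Rabs_lt_between in Hh.
  specialize (Hpos (p + h) ltac:(unfold h; lra)).
  assert (Hq : (f (p + h) - f p) / h < l + 1) by lra.
  apply (Rmult_lt_compat_r h) in Hq; auto.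
  replace ((f (p + h) - f p) / h * h) with (f (p + h) - f p) in Hq by (field; lra).
  assert (l <= Rabs l) by apply Rle_abs.
  assert (h * (l + 1) <= h * (Rabs l + 1)) by (apply Rmult_le_compat_l; lra).
  assert (h * (Rabs l + 1) <= e * (Rabs l + 1)) by (apply Rmult_le_compat_r; unfold h in *; lra).
  assert (e * (Rabs l + 1) = - f p / 2) by (unfold e; field; lra).
  lra.
Qed.

Lemma pos_right_deriv (f : R -> R) (p q l : R) : is_derive f p l -> p < q -> f p = 0 ->
  (forall x, p < x < q -> 0 < f x) -> 0 <= l.
Proof.
  intros Hd Hpq H0 Hpos. destruct (Rle_or_lt 0 l) as [|Hn]; auto. exfalso.
  destruct (dlim f p l Hd (- l / 2) ltac:(lra)) as [del [Hdel Hh]].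
  set (h := Rmin del (q - p) / 2).
  assert (h3 : Rmin del (q - p) <= del) by apply Rmin_l.
  assert (h4 : Rmin del (q - p) <= q - p) by apply Rmin_r.
  assert (0 < Rmin del (q - p)) by (apply Rmin_pos; lra).
  assert (Hh0 : 0 < h) by (unfold h; lra).
  specialize (Hh h ltac:(lra) ltac:(rewrite Rabs_pos_eq; unfold h; lra)).
  apply Rabs_lt_between in Hh. rewrite H0 in Hh.
  specialize (Hpos (p + h) ltac:(unfold h; lra)).
  assert (Hq : (f (p + h) - 0) / h < 0) by lra.
  replace ((f (p + h) - 0) / h) with (f (p + h) / h) in Hq by (field; lra).
  assert (0 < f (p + h) / h) by (apply Rdiv_lt_0_compat; auto). lra.
Qed.

Lemma pos_left_val (f : R -> R) (p q l : R) : is_derive f q l -> p < q ->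
  (forall x, p < x < q -> 0 < f x) -> 0 <= f q.
Proof.
  intros Hd Hpq Hpos.
  assert (Hd' : is_derive (fun t => f (- t)) (- q) (- l)) by (apply isd_comp_opp; rewrite Ropp_involutive; auto).
  pose proof (pos_right_val (fun t => f (- t)) (- q) (- p) (- l) Hd' ltac:(lra)).
  cbv beta in H. rewrite Ropp_involutive in H. apply H.
  intros x Hx. apply Hpos. lra.
Qed.

Lemma pos_left_deriv (f : R -> R) (p q l : R) : is_derive f q l -> p < q -> f q = 0 ->
  (forall x, p < x < q -> 0 < f x) -> l <= 0.
Proof.
  intros Hd Hpq H0 Hpos.
  assert (Hd' : is_derive (fun t => f (- t)) (- q) (- l)) by (apply isd_comp_opp; rewrite Ropp_involutive; auto).
  pose proof (pos_right_deriv (fun t => f (- t)) (- q) (- p) (- l) Hd' ltac:(lra)).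
  cbv beta in H. rewrite Ropp_involutive in H. 
  assert (0 <= - l); [|lra]. apply H; auto.
  intros x Hx. apply Hpos. lra.
Qed.

Lemma sign_const (f : R -> R) (I : R -> Prop) : continuity f ->
  (forall a b c, I a -> I b -> a <= c <= b -> I c) -> (forall x, I x -> f x <> 0) ->
  forall x y, I x -> I y -> 0 < f x -> 0 < f y.
Proof.
  intros Hc Hconv Hnz x y Hx Hy Hfx.
  destruct (Rle_or_lt (f y) 0) as [Hle|]; auto. exfalso.
  assert (Hfy : f y < 0) by (destruct Hle; auto; exfalso; apply (Hnz y Hy); auto).
  destruct (Rlt_or_le y x) as [Hyx|Hxy].
  - destruct (IVT f y x Hc Hyx Hfy Hfx) as [c [Hc1 Hc2]].
    apply (Hnz c); auto. apply (Hconv y x c); auto.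
  - destruct (Req_dec x y) as [->|Hne]; [lra|].
    assert (Hc' : continuity (fun t => - f t)) by (apply continuity_opp; auto).
    destruct (IVT (fun t => - f t) x y Hc' ltac:(lra) ltac:(lra) ltac:(lra)) as [c [Hc1 Hc2]].
    apply (Hnz c); [apply (Hconv x y c); auto; lra|lra].
Qed.

Lemma sign_cases (f : R -> R) (I : R -> Prop) (x0 : R) : continuity f ->
  (forall a b c, I a -> I b -> a <= c <= b -> I c) -> (forall x, I x -> f x <> 0) -> I x0 ->
  (forall x, I x -> 0 < f x) \/ (forall x, I x -> 0 < - f x).
Proof.
  intros Hc Hconv Hnz Hx0.
  destruct (Rlt_or_le 0 (f x0)).
  - left. intros x Hx. apply (sign_const f I Hc Hconv Hnz x0 x); auto.
  - right. intros x Hx.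
    apply (sign_const (fun t => - f t) I (continuity_opp _ Hc) Hconv) with x0; auto.
    + intros y Hy Hyy. apply (Hnz y Hy). lra.
    + destruct H; [lra|]. exfalso. apply (Hnz x0); auto.
Qed.


Lemma W_small (a b c d e : R) : Rabs a < e -> Rabs b < e -> Rabs c < e -> Rabs d < e -> e <= 1 ->
  Rabs (a * b - c * d) < 2 * e.
Proof.
  intros Ha Hb Hc Hd He.
  assert (H1 : Rabs (a * b) < e) by (rewrite Rabs_mult; pose proof (Rabs_pos a); pose proof (Rabs_pos b); nra).
  assert (H2 : Rabs (c * d) < e) by (rewrite Rabs_mult; pose proof (Rabs_pos c); pose proof (Rabs_pos d); nra).
  unfold Rminus. eapply Rle_lt_trans. apply Rabs_triang. rewrite Rabs_Ropp. lra.
Qed.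

Lemma W_strict (al mi mj : R) (ui ui1 uj uj1 : R -> R) (a b : R) :
  sol al mi ui ui1 -> sol al mj uj uj1 -> mi < mj -> a < b ->
  (forall x, a < x < b -> 0 < ui x /\ 0 < uj x) -> Wr ui ui1 uj uj1 b < Wr ui ui1 uj uj1 a.
Proof.
  intros Hi Hj Hm Hab Hp.
  apply (anti_lt (Wr ui ui1 uj uj1) (fun t => (mi - mj) * (ui t * uj t)) a b Hab).
  - intros t _. apply (Wr_deriv al); auto.
  - intros t Ht. destruct (Hp t Ht). assert (0 < ui t * uj t) by nra. nra.
Qed.

Lemma W_decay_p (al mi mj : R) (ui ui1 uj uj1 : R -> R) : 0 <= al ->
  EF al mi ui ui1 -> EF al mj uj uj1 ->
  forall e, 0 < e -> e <= 1 -> exists T, forall t, T <= t -> Rabs (Wr ui ui1 uj uj1 t) < 2 * e.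
Proof.
  intros Hal Hi Hj e He He1.
  destruct (decay_p al mi ui ui1 Hal Hi e He) as [T1 H1].
  destruct (decay_p al mj uj uj1 Hal Hj e He) as [T2 H2].
  exists (Rmax T1 T2). intros t Ht.
  pose proof (Rmax_l T1 T2). pose proof (Rmax_r T1 T2).
  destruct (H1 t ltac:(lra)). destruct (H2 t ltac:(lra)).
  unfold Wr. apply W_small; auto.
Qed.

Lemma W_decay_m (al mi mj : R) (ui ui1 uj uj1 : R -> R) : 0 <= al ->
  EF al mi ui ui1 -> EF al mj uj uj1 ->
  forall e, 0 < e -> e <= 1 -> exists T, forall t, t <= T -> Rabs (Wr ui ui1 uj uj1 t) < 2 * e.
Proof.
  intros Hal Hi Hj e He He1.
  destruct (decay_m al mi ui ui1 Hal Hi e He) as [T1 H1].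
  destruct (decay_m al mj uj uj1 Hal Hj e He) as [T2 H2].
  exists (Rmin T1 T2). intros t Ht.
  pose proof (Rmin_l T1 T2). pose proof (Rmin_r T1 T2).
  destruct (H1 t ltac:(lra)). destruct (H2 t ltac:(lra)).
  unfold Wr. apply W_small; auto.
Qed.

Lemma sturmR (al mi mj : R) (ui ui1 uj uj1 : R -> R) (z : R) : 0 <= al ->
  EF al mi ui ui1 -> EF al mj uj uj1 -> mi < mj -> ui z = 0 ->
  (forall x, z < x -> 0 < ui x /\ 0 < uj x) -> False.
Proof.
  intros Hal Hi Hj Hm Hz Hp.
  assert (Hsi := proj1 Hi). assert (Hsj := proj1 Hj).
  assert (Hd1 : 0 <= ui1 z).
  { apply (pos_right_deriv ui z (z + 1) (ui1 z) (proj1 Hsi z) ltac:(lra) Hz).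
    intros x Hx; apply Hp; lra. }
  assert (Hd2 : 0 <= uj z).
  { apply (pos_right_val uj z (z + 1) (uj1 z) (proj1 Hsj z) ltac:(lra)).
    intros x Hx; apply Hp; lra. }
  assert (HWz : Wr ui ui1 uj uj1 z <= 0) by (unfold Wr; rewrite Hz; nra).
  assert (HW1 : Wr ui ui1 uj uj1 (z + 1) < Wr ui ui1 uj uj1 z).
  { apply (W_strict al mi mj); auto; [lra|]. intros x Hx; apply Hp; lra. }
  set (w1 := Wr ui ui1 uj uj1 (z + 1)) in *.
  set (e := Rmin 1 (- w1 / 4)).
  assert (He : 0 < e) by (unfold e; apply Rmin_pos; lra).
  assert (He1 : e <= 1) by apply Rmin_l. assert (He2 : e <= - w1 / 4) by apply Rmin_r.
  destruct (W_decay_p al mi mj ui ui1 uj uj1 Hal Hi Hj e He He1) as [T HT].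
  set (t := Rmax T (z + 2)).
  pose proof (Rmax_l T (z + 2)). pose proof (Rmax_r T (z + 2)).
  specialize (HT t ltac:(unfold t; lra)).
  assert (Hlt : Wr ui ui1 uj uj1 t < w1).
  { apply (W_strict al mi mj); auto; [unfold t; lra|]. intros x Hx; apply Hp; lra. }
  apply Rabs_lt_between in HT. lra.
Qed.

Lemma sturmL (al mi mj : R) (ui ui1 uj uj1 : R -> R) (z : R) : 0 <= al ->
  EF al mi ui ui1 -> EF al mj uj uj1 -> mi < mj -> ui z = 0 ->
  (forall x, x < z -> 0 < ui x /\ 0 < uj x) -> False.
Proof.
  intros Hal Hi Hj Hm Hz Hp.
  assert (Hsi := proj1 Hi). assert (Hsj := proj1 Hj).
  assert (Hd1 : ui1 z <= 0).
  { apply (pos_left_deriv ui (z - 1) z (ui1 z) (proj1 Hsi z) ltac:(lra) Hz).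
    intros x Hx; apply Hp; lra. }
  assert (Hd2 : 0 <= uj z).
  { apply (pos_left_val uj (z - 1) z (uj1 z) (proj1 Hsj z) ltac:(lra)).
    intros x Hx; apply Hp; lra. }
  assert (HWz : 0 <= Wr ui ui1 uj uj1 z) by (unfold Wr; rewrite Hz; nra).
  assert (HW1 : Wr ui ui1 uj uj1 z < Wr ui ui1 uj uj1 (z - 1)).
  { apply (W_strict al mi mj); auto; [lra|]. intros x Hx; apply Hp; lra. }
  set (w1 := Wr ui ui1 uj uj1 (z - 1)) in *.
  set (e := Rmin 1 (w1 / 4)).
  assert (He : 0 < e) by (unfold e; apply Rmin_pos; lra).
  assert (He1 : e <= 1) by apply Rmin_l. assert (He2 : e <= w1 / 4) by apply Rmin_r.
  destruct (W_decay_m al mi mj ui ui1 uj uj1 Hal Hi Hj e He He1) as [T HT].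
  set (t := Rmin T (z - 2)).
  pose proof (Rmin_l T (z - 2)). pose proof (Rmin_r T (z - 2)).
  specialize (HT t ltac:(unfold t; lra)).
  assert (Hlt : w1 < Wr ui ui1 uj uj1 t).
  { apply (W_strict al mi mj); auto; [unfold t; lra|]. intros x Hx; apply Hp; lra. }
  apply Rabs_lt_between in HT. lra.
Qed.

Lemma sturmRR (al mi mj : R) (ui ui1 uj uj1 : R -> R) : 0 <= al ->
  EF al mi ui ui1 -> EF al mj uj uj1 -> mi < mj ->
  (forall x, 0 < ui x /\ 0 < uj x) -> False.
Proof.
  intros Hal Hi Hj Hm Hp.
  assert (Hsi := proj1 Hi). assert (Hsj := proj1 Hj).
  assert (HW1 : Wr ui ui1 uj uj1 1 < Wr ui ui1 uj uj1 0).
  { apply (W_strict al mi mj); auto. lra. }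
  set (d := Wr ui ui1 uj uj1 0 - Wr ui ui1 uj uj1 1).
  set (e := Rmin 1 (d / 8)).
  assert (He : 0 < e) by (unfold e, d; apply Rmin_pos; lra).
  assert (He1 : e <= 1) by apply Rmin_l. assert (He2 : e <= d / 8) by apply Rmin_r.
  destruct (W_decay_p al mi mj ui ui1 uj uj1 Hal Hi Hj e He He1) as [T1 HT1].
  destruct (W_decay_m al mi mj ui ui1 uj uj1 Hal Hi Hj e He He1) as [T2 HT2].
  set (tr := Rmax T1 2). set (tl := Rmin T2 (-1)).
  pose proof (Rmax_l T1 2). pose proof (Rmax_r T1 2).
  pose proof (Rmin_l T2 (-1)). pose proof (Rmin_r T2 (-1)).
  specialize (HT1 tr ltac:(unfold tr; lra)). specialize (HT2 tl ltac:(unfold tl; lra)).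
  assert (Hr : Wr ui ui1 uj uj1 tr < Wr ui ui1 uj uj1 1).
  { apply (W_strict al mi mj); auto; unfold tr; lra. }
  assert (Hl : Wr ui ui1 uj uj1 0 < Wr ui ui1 uj uj1 tl).
  { apply (W_strict al mi mj); auto; unfold tl; lra. }
  apply Rabs_lt_between in HT1. apply Rabs_lt_between in HT2. unfold d in *. lra.
Qed.


Lemma EF_cont (al mu : R) (u u1 : R -> R) : EF al mu u u1 -> continuity u.
Proof. intros [[H1 _] _]. apply (continuity_of_derive u u1 H1). Qed.

Lemma opp_cont (f : R -> R) : continuity f -> continuity (fun t => - f t).
Proof. intros. apply continuity_opp. auto. Qed.

Lemma zero_gen (al mi mj : R) (ui ui1 uj uj1 : R -> R) (I : R -> Prop) (x0 : R) : 0 <= al ->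
  EF al mi ui ui1 -> EF al mj uj uj1 -> I x0 ->
  (forall a b c, I a -> I b -> a <= c <= b -> I c) ->
  (forall x, I x -> ui x <> 0) ->
  (forall vi vi1 vj vj1, EF al mi vi vi1 -> EF al mj vj vj1 -> (forall x, ui x = 0 -> vi x = 0) ->
      (forall x, I x -> 0 < vi x /\ 0 < vj x) -> False) ->
  exists x, I x /\ uj x = 0.
Proof.
  intros Hal Hi Hj Hx0 Hconv Hnzi Hcore.
  destruct (classic (exists x, I x /\ uj x = 0)) as [|Hno]; auto. exfalso.
  assert (Hnzj : forall x, I x -> uj x <> 0) by (intros x Hx H; apply Hno; exists x; auto).
  destruct (sign_cases ui I x0 (EF_cont _ _ _ _ Hi) Hconv Hnzi Hx0) as [Pi|Pi];
  destruct (sign_cases uj I x0 (EF_cont _ _ _ _ Hj) Hconv Hnzj Hx0) as [Pj|Pj].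
  - apply (Hcore ui ui1 uj uj1 Hi Hj); auto.
  - apply (Hcore ui ui1 _ _ Hi (EF_opp _ _ _ _ Hj)); auto.
  - apply (Hcore _ _ uj uj1 (EF_opp _ _ _ _ Hi) Hj); auto. intros x Hx; rewrite Hx; ring.
  - apply (Hcore _ _ _ _ (EF_opp _ _ _ _ Hi) (EF_opp _ _ _ _ Hj)); auto. intros x Hx; rewrite Hx; ring.
Qed.

Lemma ZR (al mi mj : R) (ui ui1 uj uj1 : R -> R) (z : R) : 0 <= al ->
  EF al mi ui ui1 -> EF al mj uj uj1 -> mi < mj -> ui z = 0 ->
  (forall x, z < x -> ui x <> 0) -> exists x, z < x /\ uj x = 0.
Proof.
  intros Hal Hi Hj Hm Hz Hnz.
  apply (zero_gen al mi mj ui ui1 uj uj1 (fun x => z < x) (z + 1) Hal Hi Hj); auto.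
  - lra.
  - intros; lra.
  - intros vi vi1 vj vj1 Hvi Hvj Hzz Hp. apply (sturmR al mi mj vi vi1 vj vj1 z Hal Hvi Hvj Hm); auto.
Qed.

Lemma ZL (al mi mj : R) (ui ui1 uj uj1 : R -> R) (z : R) : 0 <= al ->
  EF al mi ui ui1 -> EF al mj uj uj1 -> mi < mj -> ui z = 0 ->
  (forall x, x < z -> ui x <> 0) -> exists x, x < z /\ uj x = 0.
Proof.
  intros Hal Hi Hj Hm Hz Hnz.
  apply (zero_gen al mi mj ui ui1 uj uj1 (fun x => x < z) (z - 1) Hal Hi Hj); auto.
  - lra.
  - intros; lra.
  - intros vi vi1 vj vj1 Hvi Hvj Hzz Hp. apply (sturmL al mi mj vi vi1 vj vj1 z Hal Hvi Hvj Hm); auto.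
Qed.

Lemma ZRR (al mi mj : R) (ui ui1 uj uj1 : R -> R) : 0 <= al ->
  EF al mi ui ui1 -> EF al mj uj uj1 -> mi < mj ->
  (forall x, ui x <> 0) -> exists x, uj x = 0.
Proof.
  intros Hal Hi Hj Hm Hnz.
  destruct (zero_gen al mi mj ui ui1 uj uj1 (fun _ => True) 0 Hal Hi Hj) as [x [_ Hx]].
  - exact I.
  - intros; exact I.
  - intros x _; apply Hnz.
  - intros vi vi1 vj vj1 Hvi Hvj Hzz Hp. apply (sturmRR al mi mj vi vi1 vj vj1 Hal Hvi Hvj Hm); auto.
  - exists x; exact Hx.
Qed.

Lemma zone (al mu : R) (u u1 : R -> R) (z : R) : 0 <= al <= 1 -> EF al mu u u1 -> mu < 234 / 100 ->
  u z = 0 -> - (9 / 10) < z < 9 / 10.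
Proof.
  intros Hal HE Hmu Hz.
  destruct (Rlt_or_le z (9/10)); [|exfalso; apply (right_side al mu u u1 z Hal HE Hmu); auto].
  destruct (Rlt_or_le (- (9/10)) z); [lra|]. exfalso.
  apply (right_side al mu _ _ (- z) Hal (EF_refl _ _ _ _ HE) Hmu); [lra|].
  rewrite Ropp_involutive. auto.
Qed.

Lemma uniqz (al mu : R) (u u1 : R -> R) (a b : R) : 0 <= al <= 1 -> EF al mu u u1 -> mu < 234 / 100 ->
  u a = 0 -> u b = 0 -> a = b.
Proof.
  intros Hal HE Hmu Ha Hb.
  pose proof (zone al mu u u1 a Hal HE Hmu Ha). pose proof (zone al mu u u1 b Hal HE Hmu Hb).
  destruct (Rtotal_order a b) as [Hab|[Hab|Hab]]; auto; exfalso.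
  - apply (middle al mu u u1 a b ltac:(lra) HE Hmu); auto; lra.
  - apply (middle al mu u u1 b a ltac:(lra) HE Hmu); auto; lra.
Qed.

Lemma three (al m1 m2 m3 : R) (u1 v1 u2 v2 u3 v3 : R -> R) : 0 <= al <= 1 ->
  EF al m1 u1 v1 -> EF al m2 u2 v2 -> EF al m3 u3 v3 -> m1 < m2 -> m2 < m3 -> m3 < 234 / 100 -> False.
Proof.
  intros Hal H1 H2 H3 h12 h23 h3.
  assert (Hal0 : 0 <= al) by lra.
  destruct (classic (exists z, u1 z = 0)) as [[z Hz]|Hno].
  - assert (Hnz : forall x, x <> z -> u1 x <> 0).
    { intros x Hx Hux. apply Hx. apply (uniqz al m1 u1 v1 x z Hal H1 ltac:(lra) Hux Hz). }
    destruct (ZR al m1 m2 u1 v1 u2 v2 z Hal0 H1 H2 h12 Hz) as [x [Hx Hx0]].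
    { intros x1 Hx1; apply Hnz; lra. }
    destruct (ZL al m1 m2 u1 v1 u2 v2 z Hal0 H1 H2 h12 Hz) as [y [Hy Hy0]].
    { intros x1 Hx1; apply Hnz; lra. }
    pose proof (uniqz al m2 u2 v2 x y Hal H2 ltac:(lra) Hx0 Hy0). lra.
  - destruct (ZRR al m1 m2 u1 v1 u2 v2 Hal0 H1 H2 h12) as [z Hz].
    { intros x Hx; apply Hno; exists x; auto. }
    assert (Hnz : forall x, x <> z -> u2 x <> 0).
    { intros x Hx Hux. apply Hx. apply (uniqz al m2 u2 v2 x z Hal H2 ltac:(lra) Hux Hz). }
    destruct (ZR al m2 m3 u2 v2 u3 v3 z Hal0 H2 H3 h23 Hz) as [x [Hx Hx0]].
    { intros x1 Hx1; apply Hnz; lra. }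
    destruct (ZL al m2 m3 u2 v2 u3 v3 z Hal0 H2 H3 h23 Hz) as [y [Hy Hy0]].
    { intros x1 Hx1; apply Hnz; lra. }
    pose proof (uniqz al m3 u3 v3 x y Hal H3 h3 Hx0 Hy0). lra.
Qed.


Lemma eig_EF (al mu : R) (u : R -> R) : is_eigenfunction al mu u -> EF al mu u (Derive u).
Proof.
  intros [Hsq [Hnz Hd]]. split; [split|split; [|split]].
  - intro t. apply Derive_correct. apply (proj1 (Hd t)).
  - intro t. eapply isd_eq. apply (proj2 (Hd t)). ring.
  - intros t0 d Hd0. apply L2_right; auto.
  - intros t0 d Hd0. apply L2_left; auto.
  - auto.
Qed.

Lemma a0_bounds : 9775 / 10000 <= Rpower (24 / 25) (1 / 3) <= 1.
Proof.
  set (a := Rpower (24 / 25) (1 / 3)).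
  assert (Hpos : 0 < a) by (unfold a, Rpower; apply exp_pos).
  assert (H3 : a ^ 3 = 24 / 25).
  { rewrite <- Rpower_pow by auto. unfold a. rewrite Rpower_mult.
    replace (1 / 3 * INR 3) with 1 by (simpl; field). apply Rpower_1. lra. }
  split.
  - destruct (Rle_or_lt (9775 / 10000) a); auto. exfalso.
    simpl in H3. assert (a * a < 9775 / 10000 * (9775 / 10000)) by nra.
    assert (a * (a * a) < 9775 / 10000 * (9775 / 10000 * (9775 / 10000))) by nra. nra.
  - destruct (Rle_or_lt a 1); auto. exfalso.
    simpl in H3. assert (1 < a * a) by nra. nra.
Qed.

Lemma sqrt15_ub : sqrt 15 <= 3873 / 1000.
Proof.
  rewrite <- (sqrt_square (3873/1000)) by lra. apply sqrt_le_1_alt. lra.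
Qed.

Theorem lemma5p5 (alpha lam3 : R) :
  0 < alpha -> alpha <= Rpower (24 / 25) (1 / 3) ->
  is_nth_eigenvalue alpha 3 lam3 ->
  lam3 >= sqrt 15 - 6 / 5 * Rpower (24 / 25) (1 / 3) - 9 / 25.
Proof.
  intros Hal Hale [[u Hu] [l [Hnd [Hlen Hin]]]].
  pose proof a0_bounds. pose proof sqrt15_ub.
  destruct (Rlt_or_le lam3 (sqrt 15 - 6 / 5 * Rpower (24 / 25) (1 / 3) - 9 / 25)) as [Hlt|]; [|lra].
  exfalso.
  assert (Hl3 : lam3 < 234 / 100) by lra.
  assert (Hal1 : 0 <= alpha <= 1) by lra.
  destruct l as [|x [|y [|z l']]]; simpl in Hlen; try discriminate.
  assert (Hxy : x <> y).
  { intro Heq. subst y. apply NoDup_cons_iff in Hnd. destruct Hnd as [Hn _]. apply Hn. left; auto. }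
  destruct (proj1 (Hin x) ltac:(left; auto)) as [[ux Hux] Hx].
  destruct (proj1 (Hin y) ltac:(right; left; auto)) as [[uy Huy] Hy].
  apply eig_EF in Hu. apply eig_EF in Hux. apply eig_EF in Huy.
  destruct (Rtotal_order x y) as [Ho|[Ho|Ho]].
  - apply (three alpha x y lam3 ux (Derive ux) uy (Derive uy) u (Derive u) Hal1 Hux Huy Hu); lra.
  - contradiction.
  - apply (three alpha y x lam3 uy (Derive uy) ux (Derive ux) u (Derive u) Hal1 Huy Hux Hu); lra.
Qed.
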